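(* Consider the behaviorally coupled two-pathogen model described in the context, with spillover constant $s\in[0,1]$, and assume $\mathcal{R}_{0,A}>\mathcal{R}_{0,B}>1$. Let $\bar I_A>0$ be the infectious level of disease $A$ at the disease-$B$-free boundary equilibrium, i.e. the unique positive solution of $e^{k I}=\beta_{0,A}\tau_I-\beta_{0,A}(\tau_I+\tau_R)I$. Suppose that disease $B$ is excluded at this equilibrium in the sense that $$\mathcal{R}_{0,B}<\frac{e^{k\bar I_A}}{e^{k\bar I_A}-s\left(e^{k\bar I_A}-1\right)}.$$ Then $$s> s_{\text{threshold}}:=\frac{1-\frac{1}{\mathcal{R}_{0,B}}}{1-\frac{1}{\mathcal{R}_{0,A}}}.$$
   Context: Model: for $i\in\{A,B\}$ with $j$ denoting the other disease, state variables $S_i,I_i,R_i,\widetilde I_i$ (proportions of the population susceptible, infectious, recovered and ''perceived infectious'' for disease $i$) satisfy $\dot S_i=-\beta_i S_iI_i+R_i/\tau_R$, $\dot I_i=\beta_iS_iI_i-I_i/\tau_I$, $\dot R_i=I_i/\tau_I-R_i/\tau_R$, $\dot{\widetilde I}_i=(I_i-\widetilde I_i)/\tau_P$, with $S_i+I_i+R_i=1$, where the transmission rate is $\beta_i=\beta_{0,i}\,e^{-k\widetilde I_i}\bigl(1-s(1-e^{-k\widetilde I_j})\bigr)$. All parameters $\beta_{0,A},\beta_{0,B},\tau_I,\tau_R,\tau_P,k$ are positive, and $s\in[0,1]$ is the spillover constant ($s=0$: no spillover, so $\beta_i=\beta_{0,i}e^{-k\widetilde I_i}$; $s=1$: perfect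 spillover, so $\beta_i=\beta_{0,i}e^{-k(\widetilde I_A+\widetilde I_B)}$; $0<s<1$: imperfect spillover). The basic reproduction numbers are $\mathcal{R}_{0,i}=\beta_{0,i}\tau_I$. The disease-$B$-free (disease-$A$ boundary) equilibrium is $(S_A,I_A,R_A,\widetilde I_A,S_B,I_B,R_B,\widetilde I_B)=(1-\bar I_A-\tfrac{\tau_R}{\tau_I}\bar I_A,\ \bar I_A,\ \tfrac{\tau_R}{\tau_I}\bar I_A,\ \bar I_A,\ 1,0,0,0)$. *)

(* Defs.v *)
From Stdlib Require Import Reals.
Open Scope R_scope.

Definition R0num (beta0 tauI : R) : R := beta0 * tauI.

Definition boundary_IA (beta0A tauI tauR k I : R) : Prop :=
  0 < I /\ exp (k * I) = beta0A * tauI - beta0A * (tauI + tauR) * I.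

Definition B_excluded (beta0B tauI k s IA : R) : Prop :=
  R0num beta0B tauI < exp (k * IA) / (exp (k * IA) - s * (exp (k * IA) - 1)).

Definition s_threshold (beta0A beta0B tauI : R) : R :=
  (1 - / R0num beta0B tauI) / (1 - / R0num beta0A tauI).

(* Main.v *)
Require Import Defs.
From Stdlib Require Import Reals Lra Psatz.
Open Scope R_scope.

Theorem theorem1 (beta0A beta0B tauI tauR tauP k s IA : R) :
  0 < beta0A -> 0 < beta0B -> 0 < tauI -> 0 < tauR -> 0 < tauP -> 0 < k ->
  0 <= s <= 1 ->
  R0num beta0A tauI > R0num beta0B tauI -> R0num beta0B tauI > 1 ->
  boundary_IA beta0A tauI tauR k IA ->
  B_excluded beta0B tauI k s IA ->
  s > s_threshold beta0A beta0B tauI.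
Proof.
  intros HA HB HI HR HP Hk Hs HAB HB1 [HIA HE] Hex.
  unfold B_excluded, s_threshold in *.
  set (RA := R0num beta0A tauI) in *.
  set (RB := R0num beta0B tauI) in *.
  set (E := exp (k * IA)) in *.
  assert (HE1 : 1 < E).
  { unfold E. rewrite <- exp_0. apply exp_increasing. nra. }
  assert (HERA : E < RA).
  { unfold RA, R0num. rewrite HE. assert (0 < beta0A * (tauI + tauR) * IA).
    { apply Rmult_lt_0_compat; [nra|lra]. } lra. }
  assert (HD : 0 < E - s * (E - 1)) by nra.
  assert (H1 : RB * (E - s * (E - 1)) < E).
  { apply (Rmult_lt_compat_r (E - s * (E - 1))) in Hex; [|lra].
    unfold Rdiv in Hex. rewrite Rmult_assoc, Rinv_l in Hex; lra. }
  assert (H2 : s * RB * (E - 1) > E * (RB - 1)) by nra.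
  assert (H3 : s * RB * (RA - 1) > RA * (RB - 1)).
  {
    assert (RA * (RB - 1) * (E - 1) < E * (RB - 1) * (RA - 1)) by nra.
    assert (s * RB * (RA - 1) * (E - 1) > RA * (RB - 1) * (E - 1)) by nra.
    nra. }
  replace ((1 - / RB) / (1 - / RA)) with (RA * (RB - 1) / (RB * (RA - 1))).
  2:{ field. lra. }
  apply Rlt_gt. apply Rmult_lt_reg_r with (RB * (RA - 1)). nra.
  unfold Rdiv. rewrite Rmult_assoc, Rinv_l by nra. nra.
Qed.
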